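(* Let $n=ld$ with positive integers $l,d$, and let $k\geq 2$ be an integer. Let $A\in\mathbb{R}^{m\times n}$ be partitioned into blocks $A=[A[1],A[2],\dots,A[l]]$ with $A[i]\in\mathbb{R}^{m\times d}$, where each $A[i]$ is orthonormal, i.e. $(A[i])^TA[i]=I_d$. Let $\mu_B=\max_{1\leq i<j\leq l}\|(A[i])^TA[j]\|_2$ (spectral norm) and suppose $$\mu_B<\frac{1}{(2k-1)d}.$$ Let $\bm{x}\in\mathbb{R}^n$ be arbitrary, let $\epsilon\geq 0$, let $\bm{z}\in\mathbb{R}^m$ with $\|\bm{z}\|_2\leq\epsilon$, and set $\bm{b}=A\bm{x}+\bm{z}$. Let $\lambda>0$ and let $\bm{x}^{\sharp}$ be an optimal solution of $$\min_{\bm{y}\in\mathbb{R}^n}\ \|\bm{y}\|_{2,1}+\frac{1}{2\lambda}\|\bm{b}-A\bm{y}\|_2^2 .$$ Define $$\beta_1=\frac{\sqrt{1+(k-1)d\mu_B}}{1-(k-1)d\mu_B},\qquad \beta_2=\frac{\sqrt{k}\,d\mu_B}{1-(k-1)d\mu_B},$$ $$f_k(t)=kt^2+3\sqrt{k}\,t+3,\qquad g_k(t)=2kt^2+4\sqrt{k}\,t+1 .$$ Then $$\|A(\bm{x}^{\sharp}-\bm{x})\|_2\leq \frac{2\lambda}{\sqrt{k}\beta_1\lambda+\epsilon}\,\|\bm{x}-\bm{x}_{\{k\}}\|_{2,1}+2(\sqrt{k}\beta_1\lambda+\epsilon),$$ and $$\|\bm{x}^{\sharp}-\bm{x}\|_2\leq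 \frac{2\sqrt{k}\beta_1 f_k(\beta_2)\lambda+2g_k(\beta_2)\epsilon}{\sqrt{k}(1-\sqrt{k}\beta_2)(\sqrt{k}\beta_1\lambda+\epsilon)}\,\|\bm{x}-\bm{x}_{\{k\}}\|_{2,1}+\frac{\big(\sqrt{k}\beta_1(5+2\sqrt{k}\beta_2)\lambda+g_k(\beta_2)\epsilon\big)(\sqrt{k}\beta_1\lambda+\epsilon)}{\sqrt{k}(1-\sqrt{k}\beta_2)\lambda}.$$
   Context: Any $\bm{y}\in\mathbb{R}^n$ is partitioned into $l$ consecutive blocks $\bm{y}[i]=(\bm{y}_{(i-1)d+1},\dots,\bm{y}_{id})^T\in\mathbb{R}^d$, $i=1,\dots,l$, matching the column blocks $A[i]$ (columns $(i-1)d+1,\dots,id$ of $A$). $\|\bm{y}\|_{2,1}=\sum_{i=1}^l\|\bm{y}[i]\|_2$, and $\|\bm{y}\|_{2,0}$ is the number of indices $i$ with $\bm{y}[i]\neq 0$. $\bm{x}_{\{k\}}$ denotes a best $k$-block approximation of $\bm{x}$: $\bm{x}_{\{k\}}\in\arg\min_{\|\bm{y}\|_{2,0}\leq k}\|\bm{y}-\bm{x}\|_2$. *)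

(* Defs.v *)
From HB Require Import structures.
From mathcomp Require Import all_boot all_order all_algebra.
From mathcomp Require Import boolp classical_sets reals.
Set Implicit Arguments. Unset Strict Implicit. Unset Printing Implicit Defensive.
Import Order.TTheory GRing.Theory Num.Theory.
Local Open Scope ring_scope.
Local Open Scope classical_set_scope.

Section Defs.
Variable R : realType.

Definition norm2 (p : nat) (v : 'cV[R]_p) : R :=
  Num.sqrt (\sum_(i < p) v i 0 ^+ 2).

Definition specnorm (p q : nat) (M : 'M[R]_(p, q)) : R :=
  sup [set norm2 (M *m v) | v in [set v : 'cV[R]_q | norm2 v <= 1]].

(* Block structure: index (i, j) with i : 'I_l, j : 'I_d is coordinate i*d + j
   (mxvec_index i j has value i * d + j). *)
Definition blkA (m l d : nat) (A : 'M[R]_(m, l * d)) (i : 'I_l) : 'M[R]_(m, d) :=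
  \matrix_(r < m, c < d) A r (mxvec_index i c).

Definition blk (l d : nat) (y : 'cV[R]_(l * d)) (i : 'I_l) : 'cV[R]_d :=
  \col_(c < d) y (mxvec_index i c) 0.

Definition norm21 (l d : nat) (y : 'cV[R]_(l * d)) : R :=
  \sum_(i < l) norm2 (blk y i).

Definition norm20 (l d : nat) (y : 'cV[R]_(l * d)) : nat :=
  #|[set i : 'I_l | blk y i != 0]|.

(* block coherence mu_B = max_{i<j} ||A[i]^T A[j]||_2 (0 if l = 1) *)
Definition muB (m l d : nat) (A : 'M[R]_(m, l * d)) : R :=
  \big[Num.max/0]_(i < l) \big[Num.max/0]_(j < l | (i < j)%N)
     specnorm ((blkA A i)^T *m blkA A j).

Definition best_k_block_approx (l d k : nat) (x xk : 'cV[R]_(l * d)) : Prop :=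
  (norm20 xk <= k)%N /\
  forall y : 'cV[R]_(l * d), (norm20 y <= k)%N -> norm2 (xk - x) <= norm2 (y - x).

Definition lasso_obj (m l d : nat) (lam : R) (A : 'M[R]_(m, l * d)) (b : 'cV[R]_m)
  (y : 'cV[R]_(l * d)) : R :=
  norm21 y + (2 * lam)^-1 * norm2 (b - A *m y) ^+ 2.

End Defs.

(* Main.v *)
Require Import Defs.
From HB Require Import structures.
From mathcomp Require Import all_boot all_order all_algebra.
From mathcomp Require Import boolp classical_sets reals.
From mathcomp Require Import ring lra zify.
Import Order.TTheory GRing.Theory Num.Theory.
Local Open Scope ring_scope.



Section Basics.
Variable R : realType.
Local Set Implicit Arguments. Local Unset Strict Implicit.

Definition dot p (u v : 'cV[R]_p) : R := \sum_i u i 0 * v i 0.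

Lemma dotC p (u v : 'cV[R]_p) : dot u v = dot v u.
Proof. by apply: eq_bigr => i _; rewrite mulrC. Qed.

Lemma dotDl p (u v w : 'cV[R]_p) : dot (u + v) w = dot u w + dot v w.
Proof. by rewrite /dot -big_split; apply: eq_bigr => i _; rewrite mxE mulrDl. Qed.

Lemma dotZl p a (u v : 'cV[R]_p) : dot (a *: u) v = a * dot u v.
Proof. by rewrite /dot mulr_sumr; apply: eq_bigr => i _; rewrite mxE mulrA. Qed.

Lemma dotNl p (u v : 'cV[R]_p) : dot (- u) v = - dot u v.
Proof. by rewrite /dot -sumrN; apply: eq_bigr => i _; rewrite mxE mulNr. Qed.

Lemma dotBl p (u v w : 'cV[R]_p) : dot (u - v) w = dot u w - dot v w.
Proof. by rewrite dotDl dotNl. Qed.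

Lemma dotDr p (u v w : 'cV[R]_p) : dot w (u + v) = dot w u + dot w v.
Proof. by rewrite dotC dotDl !(dotC w). Qed.
Lemma dotZr p a (u v : 'cV[R]_p) : dot v (a *: u) = a * dot v u.
Proof. by rewrite dotC dotZl dotC. Qed.
Lemma dotNr p (u v : 'cV[R]_p) : dot v (- u) = - dot v u.
Proof. by rewrite dotC dotNl dotC. Qed.
Lemma dotBr p (u v w : 'cV[R]_p) : dot w (u - v) = dot w u - dot w v.
Proof. by rewrite dotDr dotNr. Qed.
Lemma dot0l p (v : 'cV[R]_p) : dot 0 v = 0.
Proof. by rewrite /dot big1 // => i _; rewrite mxE mul0r. Qed.
Lemma dot0r p (v : 'cV[R]_p) : dot v 0 = 0.
Proof. by rewrite dotC dot0l. Qed.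

Lemma dot_suml p (I : finType) (P : pred I) (F : I -> 'cV[R]_p) v :
  dot (\sum_(i | P i) F i) v = \sum_(i | P i) dot (F i) v.
Proof.
rewrite /dot; under eq_bigr do rewrite summxE mulr_suml.
by rewrite exchange_big.
Qed.

Lemma dot_sumr p (I : finType) (P : pred I) (F : I -> 'cV[R]_p) v :
  dot v (\sum_(i | P i) F i) = \sum_(i | P i) dot v (F i).
Proof. by rewrite dotC dot_suml; apply: eq_bigr => i _; rewrite dotC. Qed.

Lemma dotvv_ge0 p (v : 'cV[R]_p) : 0 <= dot v v.
Proof. by apply: sumr_ge0 => i _; rewrite -expr2 sqr_ge0. Qed.

Lemma dot_mulmx q p (M : 'M[R]_(q, p)) u v : dot (M *m u) v = dot u (M^T *m v).
Proof.
rewrite /dot; under eq_bigr do rewrite mxE mulr_suml.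
under [RHS]eq_bigr do rewrite mxE mulr_sumr.
rewrite exchange_big; apply: eq_bigr => j _; apply: eq_bigr => i _.
by rewrite mxE mulrCA mulrA.
Qed.

Lemma norm2E p (v : 'cV[R]_p) : norm2 v = Num.sqrt (dot v v).
Proof. by rewrite /norm2 /dot; under eq_bigr do rewrite expr2. Qed.

Lemma norm2_ge0 p (v : 'cV[R]_p) : 0 <= norm2 v.
Proof. exact: sqrtr_ge0. Qed.

Lemma norm2_sq p (v : 'cV[R]_p) : norm2 v ^+ 2 = dot v v.
Proof. by rewrite norm2E sqr_sqrtr // dotvv_ge0. Qed.

Lemma cs_sq p (u v : 'cV[R]_p) : dot u v ^+ 2 <= dot u u * dot v v.
Proof.
set a := dot u u; set b := dot v v; set c := dot u v.
have ha : 0 <= a by apply: dotvv_ge0.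
have hb : 0 <= b by apply: dotvv_ge0.
have h1 := dotvv_ge0 (b *: u - c *: v).
rewrite !(dotBl, dotBr, dotZl, dotZr) -/a -/b -/c (dotC v u) -/c in h1.
have h2 := dotvv_ge0 (a *: v - c *: u).
rewrite !(dotBl, dotBr, dotZl, dotZr) -/a -/b -/c (dotC v u) -/c in h2.
have h3 := dotvv_ge0 (u + v).
rewrite !(dotDl, dotDr) -/a -/b -/c (dotC v u) -/c in h3.
have h4 := dotvv_ge0 (u - v).
rewrite !(dotBl, dotBr) -/a -/b -/c (dotC v u) -/c in h4.
have [a0|apos] := eqVneq a 0.
  have [b0|bpos] := eqVneq b 0.
    rewrite a0 b0 in h3 h4 *. have -> : c = 0 by lra. by rewrite expr2 !mul0r.
  have bp : 0 < b by rewrite lt_def bpos hb.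
  have : 0 <= b * (a * b - c ^+ 2) by rewrite expr2; nra.
  by rewrite pmulr_rge0 // subr_ge0.
have ap : 0 < a by rewrite lt_def apos ha.
have : 0 <= a * (a * b - c ^+ 2) by rewrite expr2; nra.
by rewrite pmulr_rge0 // subr_ge0.
Qed.

Lemma cs_abs p (u v : 'cV[R]_p) : `|dot u v| <= norm2 u * norm2 v.
Proof.
rewrite -ler_sqr ?nnegrE ?normr_ge0 ?mulr_ge0 ?norm2_ge0 //.
by rewrite real_normK ?num_real // exprMn !norm2_sq cs_sq.
Qed.

Lemma cs p (u v : 'cV[R]_p) : dot u v <= norm2 u * norm2 v.
Proof. exact: le_trans (ler_norm _) (cs_abs _ _). Qed.

Lemma norm2D p (u v : 'cV[R]_p) : norm2 (u + v) <= norm2 u + norm2 v.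
Proof.
rewrite -ler_sqr ?nnegrE ?addr_ge0 ?norm2_ge0 //.
have := cs u v; rewrite sqrrD !norm2_sq !(dotDl, dotDr) (dotC v u).
lra.
Qed.

Lemma norm2Z p a (v : 'cV[R]_p) : norm2 (a *: v) = `|a| * norm2 v.
Proof.
by rewrite !norm2E dotZl dotZr mulrA -expr2 sqrtrM ?sqr_ge0 // sqrtr_sqr.
Qed.

Lemma norm2_0 p : norm2 (0 : 'cV[R]_p) = 0.
Proof. by rewrite norm2E dot0l sqrtr0. Qed.

Lemma norm2N p (v : 'cV[R]_p) : norm2 (- v) = norm2 v.
Proof. by rewrite -scaleN1r norm2Z normrN1 mul1r. Qed.

Lemma norm2_sum p (I : finType) (P : pred I) (F : I -> 'cV[R]_p) :
  norm2 (\sum_(i | P i) F i) <= \sum_(i | P i) norm2 (F i).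
Proof.
elim/big_rec2: _ => [|i a b _ IH]; first by rewrite norm2_0.
exact: le_trans (norm2D _ _) (lerD (lexx _) IH).
Qed.


Lemma sum_blk l d (F : 'I_(l * d) -> R) :
  \sum_p F p = \sum_(i < l) \sum_(c < d) F (mxvec_index i c).
Proof.
rewrite (reindex _ (curry_mxvec_bij _ _)) /= pair_bigA.
by apply: eq_bigr => -[i c].
Qed.

Lemma dot_blk l d (u v : 'cV[R]_(l * d)) :
  dot u v = \sum_i dot (blk u i) (blk v i).
Proof.
rewrite /dot sum_blk; apply: eq_bigr => i _; apply: eq_bigr => c _.
by rewrite !mxE.
Qed.

Lemma blkD l d (u v : 'cV[R]_(l * d)) i : blk (u + v) i = blk u i + blk v i.
Proof. by apply/colP => c; rewrite !mxE. Qed.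
Lemma blkN l d (u : 'cV[R]_(l * d)) i : blk (- u) i = - blk u i.
Proof. by apply/colP => c; rewrite !mxE. Qed.
Lemma blkB l d (u v : 'cV[R]_(l * d)) i : blk (u - v) i = blk u i - blk v i.
Proof. by rewrite blkD blkN. Qed.
Lemma blkZ l d a (u : 'cV[R]_(l * d)) i : blk (a *: u) i = a *: blk u i.
Proof. by apply/colP => c; rewrite !mxE. Qed.

Lemma mul_blk m l d (A : 'M[R]_(m, l * d)) (y : 'cV[R]_(l * d)) :
  A *m y = \sum_i blkA A i *m blk y i.
Proof.
apply/colP => r; rewrite mxE summxE sum_blk; apply: eq_bigr => i _.
by rewrite mxE; apply: eq_bigr => c _; rewrite !mxE.
Qed.

Definition fromblk l d (f : 'I_l -> 'cV[R]_d) : 'cV[R]_(l * d) :=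
  (mxvec (\matrix_(i, c) f i c 0))^T.

Lemma blk_fromblk l d (f : 'I_l -> 'cV[R]_d) i : blk (fromblk f) i = f i.
Proof. by apply/colP => c; rewrite !mxE mxvecE mxE. Qed.

Lemma norm2_blk l d (y : 'cV[R]_(l * d)) :
  norm2 y ^+ 2 = \sum_i norm2 (blk y i) ^+ 2.
Proof. by rewrite norm2_sq dot_blk; apply: eq_bigr => i _; rewrite norm2_sq. Qed.

Lemma specnorm_ub p q (M : 'M[R]_(p, q)) :
  has_ubound [set norm2 (M *m v) | v in [set v : 'cV[R]_q | norm2 v <= 1]].
Proof.
exists (Num.sqrt (\sum_r dot (\col_c M r c) (\col_c M r c))).
move=> _ [w /= hw <-].
rewrite /norm2; apply: ler_wsqrtr; apply: ler_sum => r _.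
have e : (M *m w) r 0 = dot (\col_c M r c) w.
  by rewrite mxE /dot; apply: eq_bigr => c _; rewrite mxE.
rewrite e -norm2_sq.
have h1 := cs_abs (\col_c M r c) w.
have h2 : `|dot (\col_c M r c) w| <= norm2 (\col_c M r c).
  apply: le_trans h1 _; rewrite ler_piMr ?norm2_ge0 //.
rewrite -real_normK ?num_real //.
by rewrite ler_sqr ?nnegrE ?normr_ge0 ?norm2_ge0.
Qed.

Lemma specnorm_le p q (M : 'M[R]_(p, q)) v :
  norm2 (M *m v) <= specnorm M * norm2 v.
Proof.
have [n0|npos] := eqVneq (norm2 v) 0.
  rewrite n0 mulr0.
  have h : norm2 (M *m v) ^+ 2 <= 0.
    by rewrite norm2_sq dot_mulmx; apply: le_trans (cs _ _) _; rewrite n0 mul0r.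
  have := norm2_ge0 (M *m v); rewrite expr2 in h; nra.
have np : 0 < norm2 v by rewrite lt_def npos norm2_ge0.
set v' := (norm2 v)^-1 *: v.
have hv' : norm2 v' <= 1.
  by rewrite /v' norm2Z ger0_norm ?invr_ge0 ?norm2_ge0 // mulVf.
have := ub_le_sup (specnorm_ub M) (ex_intro2 _ _ v' hv' erefl).
rewrite /v' -scalemxAr norm2Z ger0_norm ?invr_ge0 ?norm2_ge0 // -/(specnorm M).
by rewrite ler_pdivrMl // mulrC.
Qed.

End Basics.



Section Coh.
Variables (R : realType) (m l d : nat) (A : 'M[R]_(m, l * d)).
Local Set Implicit Arguments. Local Unset Strict Implicit.

Lemma sum_sq_le p (S : {set 'I_p}) (f : 'I_p -> R) :
  (\sum_(i in S) f i) ^+ 2 <= #|S|%:R * \sum_(i in S) f i ^+ 2.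
Proof.
have := cs_sq (\col_i (if i \in S then 1 else 0) : 'cV[R]_p)
              (\col_i (if i \in S then f i else 0)).
have -> : dot (\col_i (if i \in S then 1 else 0) : 'cV[R]_p)
              (\col_i (if i \in S then f i else 0)) = \sum_(i in S) f i.
  rewrite /dot [RHS]big_mkcond; apply: eq_bigr => i _; rewrite !mxE.
  by case: (i \in S); rewrite ?mul1r ?mul0r.
have -> : dot (\col_i (if i \in S then 1 else 0) : 'cV[R]_p)
              (\col_i (if i \in S then 1 else 0)) = #|S|%:R.
  rewrite -sumr_const /dot [RHS]big_mkcond; apply: eq_bigr => i _; rewrite !mxE.
  by case: (i \in S); rewrite ?mul1r ?mul0r.
have -> : dot (\col_i (if i \in S then f i else 0) : 'cV[R]_p)
              (\col_i (if i \in S then f i else 0)) = \sum_(i in S) f i ^+ 2.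
  rewrite /dot [RHS]big_mkcond; apply: eq_bigr => i _; rewrite !mxE.
  by case: (i \in S); rewrite ?mul0r // expr2.
by [].
Qed.

Lemma muB_ge0 : 0 <= muB A.
Proof.
rewrite /muB; elim/big_rec: _ => [|i x _ IH]; first by [].
by rewrite le_max IH orbT.
Qed.

Lemma spec_le_muB (i j : 'I_l) : (i < j)%N ->
  specnorm ((blkA A i)^T *m blkA A j) <= muB A.
Proof.
move=> ij; rewrite /muB (bigD1 i) //= le_max; apply/orP; left.
by rewrite (bigD1 j) //= le_max lexx.
Qed.

Lemma dot_coh (i j : 'I_l) a b : i != j ->
  `|dot (blkA A i *m a) (blkA A j *m b)| <= muB A * norm2 a * norm2 b.
Proof.
have key : forall (i j : 'I_l) a b, (i < j)%N ->
    `|dot (blkA A i *m a) (blkA A j *m b)| <= muB A * norm2 a * norm2 b.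
  move=> i' j' a' b' lt; rewrite dot_mulmx mulmxA.
  apply: le_trans (cs_abs _ _) _.
  apply: le_trans (ler_wpM2l (norm2_ge0 _) (specnorm_le _ _)) _.
  rewrite [muB A * _]mulrC -mulrA; apply: ler_wpM2l; first exact: norm2_ge0.
  by apply: ler_wpM2r; [exact: norm2_ge0 | exact: spec_le_muB].
move=> nij; case: (ltngtP i j) => h.
- exact: key.
- by rewrite dotC mulrAC; apply: key.
- by move/eqP: nij; case; apply: val_inj.
Qed.

Hypothesis orth : forall i, (blkA A i)^T *m blkA A i = 1%:M.

Lemma dot_orth i a b : dot (blkA A i *m a) (blkA A i *m b) = dot a b.
Proof. by rewrite dot_mulmx mulmxA orth mul1mx. Qed.


Lemma coh (S : {set 'I_l}) (h : 'cV[R]_(l * d)) (kk : nat) (a' m' : R) :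
  (#|S| <= kk)%N -> (kk%:R - 1) * muB A <= a' -> 0 <= a' -> muB A <= m' ->
  (1 - a') * (\sum_(i in S) norm2 (blk h i) ^+ 2) <=
    Num.sqrt (1 + a') * Num.sqrt (\sum_(i in S) norm2 (blk h i) ^+ 2)
      * norm2 (A *m h)
    + Num.sqrt kk%:R * m' * Num.sqrt (\sum_(i in S) norm2 (blk h i) ^+ 2)
      * \sum_(i | i \notin S) norm2 (blk h i).
Proof.
move=> hS ha' a'0 hm'.
set mu := muB A.
have mu0 : 0 <= mu by apply: muB_ge0.
set n := fun i => norm2 (blk h i).
have n0 : forall i, 0 <= n i by move=> i; apply: norm2_ge0.
set H2 := \sum_(i in S) n i ^+ 2.
have H20 : 0 <= H2 by apply: sumr_ge0 => i _; apply: sqr_ge0.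
set H := Num.sqrt H2.
have H0 : 0 <= H by apply: sqrtr_ge0.
have HH : H ^+ 2 = H2 by rewrite sqr_sqrtr.
set P := \sum_(i in S) n i.
set Q := \sum_(i | i \notin S) n i.
have P0 : 0 <= P by apply: sumr_ge0.
have Q0 : 0 <= Q by apply: sumr_ge0.
have PP : P ^+ 2 <= kk%:R * H2.
  apply: le_trans (sum_sq_le _ _) _; apply: ler_wpM2r => //.
  by rewrite ler_nat.
have hP : P <= Num.sqrt kk%:R * H.
  rewrite -ler_sqr ?nnegrE ?mulr_ge0 ?sqrtr_ge0 // exprMn sqr_sqrtr ?ler0n //.
  by rewrite HH.
set D := fun i j => dot (blkA A i *m blk h i) (blkA A j *m blk h j).
set u := \sum_(i in S) blkA A i *m blk h i.
set v := \sum_(i | i \notin S) blkA A i *m blk h i.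
have Ah : A *m h = u + v by rewrite mul_blk (bigID (fun i => i \in S)).
have uu : dot u u = \sum_(i in S) \sum_(j in S) D i j.
  by rewrite /u dot_suml; apply: eq_bigr => i _; rewrite dot_sumr.
have uv : dot u v = \sum_(i in S) \sum_(j | j \notin S) D i j.
  by rewrite /u dot_suml; apply: eq_bigr => i _; rewrite dot_sumr.
set dl := fun i j : 'I_l => if i == j then n i * n j else 0.
have dlS : forall i, i \in S -> \sum_(j in S) dl i j = n i ^+ 2.
  move=> i iS; rewrite (bigD1 i) //= /dl eqxx big1 ?addr0 ?expr2 //.
  by move=> j /andP[_ ji]; rewrite eq_sym (negbTE ji).
have E1 : `|dot u u - H2| <= mu * (P ^+ 2 - H2).
  have e1 : dot u u - H2 = \sum_(i in S) \sum_(j in S) (D i j - dl i j).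
    rewrite uu /H2 -sumrB; apply: eq_bigr => i iS.
    by rewrite sumrB dlS.
  have e2 : mu * (P ^+ 2 - H2) =
      \sum_(i in S) \sum_(j in S) (mu * (n i * n j - dl i j)).
    rewrite expr2 /P big_distrlr /= /H2 -sumrB mulr_sumr; apply: eq_bigr => i iS.
    by rewrite -[in RHS]mulr_sumr sumrB dlS.
  rewrite e1 e2; apply: le_trans (ler_norm_sum _ _ _) _.
  apply: ler_sum => i iS; apply: le_trans (ler_norm_sum _ _ _) _.
  apply: ler_sum => j jS; rewrite /dl /D.
  case: eqP => [<-|/eqP ij].
    by rewrite dot_orth // -norm2_sq expr2 !subrr normr0 mulr0.
  by rewrite !subr0 mulrA; apply: dot_coh.
have E2 : `|dot u v| <= m' * P * Q.
  rewrite uv; apply: le_trans (ler_norm_sum _ _ _) _.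
  have -> : m' * P * Q = \sum_(i in S) \sum_(j | j \notin S) m' * n i * n j.
    rewrite -mulrA big_distrlr /= mulr_sumr; apply: eq_bigr => i _.
    by rewrite mulr_sumr; apply: eq_bigr => j _; rewrite mulrA.
  apply: ler_sum => i iS; apply: le_trans (ler_norm_sum _ _ _) _.
  apply: ler_sum => j jS; rewrite /D.
  apply: le_trans (dot_coh _ _ _) _.
    by apply: contraNneq jS => <-.
  by rewrite !ler_wpM2r ?n0.
have Hmu : mu * (P ^+ 2 - H2) <= a' * H2.
  have : mu * (P ^+ 2 - H2) <= mu * ((kk%:R - 1) * H2).
    by apply: ler_wpM2l => //; rewrite mulrBl mul1r lerB.
  move=> h1; apply: le_trans h1 _; rewrite mulrA.
  by apply: ler_wpM2r => //; rewrite mulrC.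
have uu_lo : (1 - a') * H2 <= dot u u.
  move: E1; rewrite ler_norml => /andP[h2 h3]; lra.
have uu_hi : dot u u <= (1 + a') * H2.
  move: E1; rewrite ler_norml => /andP[h2 h3]; lra.
have nu : norm2 u <= Num.sqrt (1 + a') * H.
  rewrite norm2E /H -sqrtrM ?addr_ge0 //; exact: ler_wsqrtr.
have s0 : 0 <= norm2 (A *m h) by apply: norm2_ge0.
have h1 : dot u (A *m h) <= Num.sqrt (1 + a') * H * norm2 (A *m h).
  apply: le_trans (cs _ _) _; exact: ler_wpM2r.
have h2 : - dot u v <= Num.sqrt kk%:R * m' * H * Q.
  apply: le_trans (ler_normlW _) _; first by rewrite normrN.
  apply: le_trans E2 _.
  have m'0 : 0 <= m' by apply: le_trans hm'.
  rewrite [_ * m']mulrC -!mulrA; apply: ler_wpM2l => //.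
  rewrite [X in _ <= X]mulrCA mulrA; apply: ler_wpM2r => //.
  by rewrite mulrC.
have : dot u u = dot u (A *m h) - dot u v by rewrite Ah dotDr addrK.
lra.
Qed.

End Coh.



Section Opt.
Variables (R : realType) (m l d : nat) (A : 'M[R]_(m, l * d)).
Local Set Implicit Arguments. Local Unset Strict Implicit.

Lemma lim_le (a b c : R) : 0 <= c ->
  (forall t, 0 < t -> t < 1 -> a <= b + t * c) -> a <= b.
Proof.
move=> c0 H; rewrite leNgt; apply/negP => ab.
set e := a - b.
have e0 : 0 < e by rewrite subr_gt0.
have ec0 : 0 < e + c + 1 by lra.
set t := e / (e + c + 1).
have t0 : 0 < t by apply: divr_gt0.
have ht : t * (e + c + 1) = e by rewrite /t divfK // gt_eqF.
have t1 : t < 1 by rewrite /t ltr_pdivrMr // mul1r; lra.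
have := H t t0 t1 => h.
have ee : e = a - b by [].
have te := mulr_gt0 t0 e0.
have tc : t * (e + c + 1) = t * e + t * c + t by ring.
lra.
Qed.

Lemma norm2D_sq p (r w : 'cV[R]_p) :
  norm2 (r + w) ^+ 2 = norm2 r ^+ 2 + 2 * dot r w + norm2 w ^+ 2.
Proof. rewrite !norm2_sq !(dotDl, dotDr) (dotC w r); ring. Qed.

Variables (lam : R) (b : 'cV[R]_m) (xs : 'cV[R]_(l * d)).
Hypothesis lam0 : 0 < lam.
Hypothesis opt : forall y, lasso_obj lam A b xs <= lasso_obj lam A b y.

Let r := b - A *m xs.
Let g := A^T *m r.

Lemma opt_dual i : norm2 (blk g i) <= lam.
Proof.
set w := blk g i.
set v := fromblk (fun j => if j == i then w else 0).
set k0 := (2 * lam)^-1.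
have h2l : 0 < 2 * lam.
  by rewrite mulr_gt0.
have k00 : 0 < k0 by rewrite invr_gt0.
have hk0 : lam * (2 * k0) = 1 by rewrite /k0 mulrA [lam * 2]mulrC mulfV // gt_eqF.
set nw := norm2 w.
have nw0 : 0 <= nw by apply: norm2_ge0.
set N := norm2 (A *m v) ^+ 2.
have N0 : 0 <= N by apply: sqr_ge0.
have key : forall t, 0 < t -> t < 1 -> 2 * k0 * nw ^+ 2 <= nw + t * (k0 * N).
  move=> t t0 t1; have := opt (xs + t *: v).
  rewrite /lasso_obj -/k0.
  have h1 : norm21 (xs + t *: v) <= norm21 xs + t * nw.
    rewrite /norm21.
    have -> : nw = \sum_j norm2 (blk v j).
      rewrite (bigD1 i) //= big1 ?addr0; first by rewrite /v blk_fromblk eqxx.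
      by move=> j ji; rewrite /v blk_fromblk (negbTE ji) norm2_0.
    rewrite mulr_sumr -big_split /=; apply: ler_sum => j _.
    by rewrite blkD blkZ; apply: le_trans (norm2D _ _) _; rewrite norm2Z gtr0_norm.
  have h2 : b - A *m (xs + t *: v) = r + (- t) *: (A *m v).
    by rewrite mulmxDr -scalemxAr scaleNr opprD addrA.
  have h3 : dot r (A *m v) = nw ^+ 2.
    rewrite dotC dot_mulmx -/g dot_blk (bigD1 i) //= big1 ?addr0.
      by rewrite /v blk_fromblk eqxx norm2_sq dotC.
    by move=> j ji; rewrite /v blk_fromblk (negbTE ji) dot0l.
    rewrite h2 [norm2 (_ + (- t) *: _) ^+ 2]norm2D_sq dotZr h3 norm2Z exprMn real_normK ?num_real // -/N.
  move=> h; nra.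
have h := lim_le (mulr_ge0 (ltW k00) N0) key.
have : lam * (2 * k0 * nw ^+ 2) <= lam * nw by rewrite ler_pM2l.
rewrite mulrA hk0 mul1r expr2 => h'.
have [->|nwp] := eqVneq nw 0; first exact: ltW.
have nwp' : 0 < nw by rewrite lt_def nwp nw0.
by move: h'; rewrite ler_pM2r.
Qed.

Lemma opt_xs : lam * norm21 xs <= dot xs g.
Proof.
set k0 := (2 * lam)^-1.
have h2l : 0 < 2 * lam.
  by rewrite mulr_gt0.
have k00 : 0 < k0 by rewrite invr_gt0.
have hk0 : lam * (2 * k0) = 1 by rewrite /k0 mulrA [lam * 2]mulrC mulfV // gt_eqF.
set N := norm2 (A *m xs) ^+ 2.
have N0 : 0 <= N by apply: sqr_ge0.
have key : forall t, 0 < t -> t < 1 -> norm21 xs <= 2 * k0 * dot xs g + t * (k0 * N).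
  move=> t t0 t1; have := opt ((1 - t) *: xs).
  rewrite /lasso_obj -/k0.
  have h1 : norm21 ((1 - t) *: xs) = (1 - t) * norm21 xs.
    rewrite /norm21 mulr_sumr; apply: eq_bigr => j _.
    by rewrite blkZ norm2Z ger0_norm // subr_ge0 ltW.
  have h2 : b - A *m ((1 - t) *: xs) = r + t *: (A *m xs).
    by rewrite -scalemxAr scalerBl scale1r opprB addrA addrAC.
  have h3 : dot r (A *m xs) = dot xs g by rewrite dotC dot_mulmx.
  rewrite h1 h2 [norm2 (_ + t *: _) ^+ 2]norm2D_sq dotZr h3 norm2Z exprMn real_normK ?num_real // -/N.
  move=> h; nra.
have h := lim_le (mulr_ge0 (ltW k00) N0) key.
have : lam * norm21 xs <= lam * (2 * k0 * dot xs g) by rewrite ler_pM2l.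
by rewrite mulrA hk0 mul1r.
Qed.

End Opt.



Section Fin.
Variable R : realType.

Lemma final2 (sk b1 b2 lam eps sig s Q nh : R) :
  0 < sk -> 0 < b1 -> 0 <= b2 -> sk * b2 < 1 -> 0 < lam -> 0 <= eps ->
  0 <= sig -> 0 <= s -> 0 <= Q ->
  (sk * b1 * lam + eps) * s <= (sk * b1 * lam + eps) ^+ 2 + 2 * lam * sig ->
  lam * (1 - sk * b2) * Q <= (sk * b1 * lam + eps) ^+ 2 / 4 + 2 * lam * sig ->
  nh <= (2 + sk * b2) * b1 * s + ((2 + sk * b2) * b2 + sk^-1) * Q ->
  nh <= (2 * sk * b1 * (sk ^+ 2 * b2 ^+ 2 + 3 * sk * b2 + 3) * lam
          + 2 * (2 * sk ^+ 2 * b2 ^+ 2 + 4 * sk * b2 + 1) * eps)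
        / (sk * (1 - sk * b2) * (sk * b1 * lam + eps)) * sig
      + (sk * b1 * (5 + 2 * sk * b2) * lam
          + (2 * sk ^+ 2 * b2 ^+ 2 + 4 * sk * b2 + 1) * eps)
        * (sk * b1 * lam + eps) / (sk * (1 - sk * b2) * lam).
Proof.
move=> sk0 b10 b20 t1 lam0 eps0 sig0 s0 Q0 hs hQ hn.
have t0 : 0 <= sk * b2 by apply: mulr_ge0 => //; apply: ltW.
have p0 : 0 < sk * b1 * lam by rewrite !mulr_gt0.
have c0 : 0 < sk * b1 * lam + eps by lra.
have omt : 0 < 1 - sk * b2 by lra.
have M0 : 0 < sk * (1 - sk * b2) * lam * (sk * b1 * lam + eps) by rewrite !mulr_gt0.
rewrite -(ler_pM2l M0).
set c := sk * b1 * lam + eps.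
set t := sk * b2.
have tE : t = sk * b2 by []. have cE : c = sk * b1 * lam + eps by [].
have eT : sk * (1 - t) * lam * c *
   ((2 * sk * b1 * (sk ^+ 2 * b2 ^+ 2 + 3 * sk * b2 + 3) * lam
          + 2 * (2 * sk ^+ 2 * b2 ^+ 2 + 4 * sk * b2 + 1) * eps)
        / (sk * (1 - t) * c) * sig
      + (sk * b1 * (5 + 2 * sk * b2) * lam
          + (2 * sk ^+ 2 * b2 ^+ 2 + 4 * sk * b2 + 1) * eps)
        * c / (sk * (1 - t) * lam))
  = (2 * sk * b1 * (sk ^+ 2 * b2 ^+ 2 + 3 * sk * b2 + 3) * lam
          + 2 * (2 * sk ^+ 2 * b2 ^+ 2 + 4 * sk * b2 + 1) * eps) * lam * sig
    + (sk * b1 * (5 + 2 * sk * b2) * lam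
          + (2 * sk ^+ 2 * b2 ^+ 2 + 4 * sk * b2 + 1) * eps) * c ^+ 2.
  field.
  by rewrite !gt_eqF.
rewrite eT.
have hm : sk * (1 - t) * lam * c * nh <=
    sk * (1 - t) * lam * c * ((2 + t) * b1 * s + ((2 + t) * b2 + sk^-1) * Q).
  by rewrite ler_pM2l.
have eM : sk * (1 - t) * lam * c * ((2 + t) * b1 * s + ((2 + t) * b2 + sk^-1) * Q)
   = (2 + t) * (1 - t) * (sk * b1 * lam) * (c * s) + (1 + t) ^+ 2 * c * (lam * (1 - t) * Q).
  rewrite /t; field; by rewrite gt_eqF.
rewrite eM in hm; apply: le_trans hm _.
have k1 : 0 <= (2 + t) * (1 - t) * (sk * b1 * lam).
  by apply: mulr_ge0; [apply: mulr_ge0; lra | exact: ltW].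
have k2 : 0 <= (1 + t) ^+ 2 * c by rewrite mulr_ge0 ?sqr_ge0 // ltW.
apply: le_trans (lerD (ler_wpM2l k1 hs) (ler_wpM2l k2 hQ)) _.
rewrite -subr_ge0.
set p := sk * b1 * lam.
have -> : (2 * sk * b1 * (sk ^+ 2 * b2 ^+ 2 + 3 * sk * b2 + 3) * lam +
     2 * (2 * sk ^+ 2 * b2 ^+ 2 + 4 * sk * b2 + 1) * eps) * lam * sig +
    (sk * b1 * (5 + 2 * sk * b2) * lam + (2 * sk ^+ 2 * b2 ^+ 2 + 4 * sk * b2 + 1) * eps) * c ^+ 2 -
    ((2 + t) * (1 - t) * p * (c ^+ 2 + 2 * lam * sig) +
     (1 + t) ^+ 2 * c * (c ^+ 2 / 4 + 2 * lam * sig))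
  = 2 * (lam * sig) * (p + eps) * (t ^+ 2 + 2 * t)
    + c ^+ 2 * (p * (11 + 10 * t + 3 * t ^+ 2) / 4 + eps * (7 * t ^+ 2 + 14 * t + 3) / 4).
  by rewrite /c /p /t; field.
have ls : 0 <= lam * sig by rewrite mulr_ge0 // ltW.
apply: addr_ge0.
  by rewrite !mulr_ge0 ?addr_ge0 ?sqr_ge0 ?mulr_ge0 // ltW.
apply: mulr_ge0; first exact: sqr_ge0.
apply: addr_ge0; apply: mulr_ge0; rewrite ?invr_ge0 ?ler0n //;
  apply: mulr_ge0; rewrite ?addr_ge0 ?mulr_ge0 ?sqr_ge0 ?ler0n //; exact: ltW.
Qed.

End Fin.



Section Misc.
Variable R : realType.
Local Set Implicit Arguments. Local Unset Strict Implicit.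

Lemma coh_fin (H2 a c1 c2 s Q : R) : 0 <= H2 -> 0 < 1 - a ->
  0 <= c1 -> 0 <= c2 -> 0 <= s -> 0 <= Q ->
  (1 - a) * H2 <= c1 * Num.sqrt H2 * s + c2 * Num.sqrt H2 * Q ->
  Num.sqrt H2 <= c1 / (1 - a) * s + c2 / (1 - a) * Q.
Proof.
move=> H20 a1 c10 c20 s0 Q0 h.
have HH : Num.sqrt H2 ^+ 2 = H2 by rewrite sqr_sqrtr.
set H := Num.sqrt H2 in HH h *.
have H0 : 0 <= H by apply: sqrtr_ge0.
have -> : c1 / (1 - a) * s + c2 / (1 - a) * Q = (c1 * s + c2 * Q) / (1 - a).
  by rewrite mulrAC [c2 / _ * _]mulrAC -mulrDl.
rewrite ler_pdivlMr //.
have [->|Hn] := eqVneq H 0; first by rewrite mul0r addr_ge0 ?mulr_ge0.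
have Hp : 0 < H by rewrite lt_def Hn H0.
rewrite -(ler_pM2l Hp); rewrite -HH expr2 in h.
have e1 : H * (H * (1 - a)) = (1 - a) * (H * H) by ring.
have e2 : H * (c1 * s + c2 * Q) = c1 * H * s + c2 * H * Q by ring.
by rewrite e1 e2.
Qed.

Lemma norm2_diff1 p (a c : 'cV[R]_p) : norm2 a - norm2 c <= norm2 (c - a).
Proof.
have := norm2D c (a - c); rewrite addrC subrK -opprB norm2N; lra.
Qed.

Lemma norm2_diff2 p (a c : 'cV[R]_p) :
  norm2 a - norm2 c <= 2 * norm2 a - norm2 (c - a).
Proof. have := norm2D c (- a); rewrite norm2N; lra. Qed.

End Misc.

Theorem theorem3 (R : realType) (m l d k : nat)
  (A : 'M[R]_(m, l * d)) (x : 'cV[R]_(l * d)) (eps : R) (z : 'cV[R]_m)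
  (lam : R) (xs xk : 'cV[R]_(l * d)) :
  (0 < l)%N -> (0 < d)%N -> (2 <= k)%N ->
  (forall i : 'I_l, (blkA A i)^T *m blkA A i = 1%:M) ->
  muB A < ((2 * k - 1) * d)%:R^-1 ->
  0 <= eps -> norm2 z <= eps ->
  0 < lam ->
  (forall y : 'cV[R]_(l * d),
     lasso_obj lam A (A *m x + z) xs <= lasso_obj lam A (A *m x + z) y) ->
  best_k_block_approx k x xk ->
  let mu := muB A in
  let sk := Num.sqrt (k%:R : R) in
  let beta1 := Num.sqrt (1 + (k.-1 * d)%:R * mu) / (1 - (k.-1 * d)%:R * mu) in
  let beta2 := sk * d%:R * mu / (1 - (k.-1 * d)%:R * mu) in
  let fk := fun t : R => k%:R * t ^+ 2 + 3 * sk * t + 3 in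
  let gk := fun t : R => 2 * k%:R * t ^+ 2 + 4 * sk * t + 1 in
  let sigma := norm21 (x - xk) in
  norm2 (A *m (xs - x)) <=
    2 * lam / (sk * beta1 * lam + eps) * sigma + 2 * (sk * beta1 * lam + eps)
  /\
  norm2 (xs - x) <=
    (2 * sk * beta1 * fk beta2 * lam + 2 * gk beta2 * eps)
      / (sk * (1 - sk * beta2) * (sk * beta1 * lam + eps)) * sigma
    + (sk * beta1 * (5 + 2 * sk * beta2) * lam + gk beta2 * eps)
      * (sk * beta1 * lam + eps) / (sk * (1 - sk * beta2) * lam).
Proof.
move=> l0 d0 k2 orth hmu eps0 hz lam0 opt hxk mu sk beta1 beta2 fk gk sigma.
have mu0 : 0 <= mu by apply: muB_ge0.
set a' := (k.-1 * d)%:R * mu.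
have a'0 : 0 <= a' by rewrite mulr_ge0 ?ler0n.
have sk0 : 0 < sk by rewrite sqrtr_gt0 ltr0n; lia.
have skk : sk ^+ 2 = k%:R by rewrite sqr_sqrtr ?ler0n.
have sk0' : 0 <= sk := ltW sk0.
have hX : (0 < (2 * k - 1) * d)%N by rewrite muln_gt0 d0; lia.
have hmu1 : ((2 * k - 1) * d)%:R * mu < 1.
  have X0 : 0 < ((2 * k - 1) * d)%:R :> R by rewrite ltr0n.
  by rewrite -(ltr_pM2l X0) in hmu; rewrite mulfV ?gt_eqF in hmu.
have ekd : ((2 * k - 1) * d)%:R = (k.-1 * d)%:R + sk ^+ 2 * d%:R :> R.
  by rewrite skk -natrM -natrD; congr (_%:R); lia.
have kdmu0 : 0 <= sk ^+ 2 * d%:R * mu by apply: mulr_ge0 => //; apply: mulr_ge0; rewrite ?sqr_ge0 ?ler0n.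
have a'1 : a' + sk ^+ 2 * d%:R * mu < 1.
  by move: hmu1; rewrite ekd mulrDl.
have oma : 0 < 1 - a' by lra.
have b2E : beta2 = sk * d%:R * mu / (1 - a') by [].
have b20 : 0 <= beta2 by rewrite b2E divr_ge0 ?mulr_ge0 ?ler0n // ?ltW.
have t1 : sk * beta2 < 1.
  rewrite b2E mulrA ltr_pdivrMr // mul1r !mulrA -expr2; lra.
have b1E : beta1 = Num.sqrt (1 + a') / (1 - a') by [].
have b10 : 0 < beta1 by rewrite b1E divr_gt0 // sqrtr_gt0; lra.
set b := A *m x + z.
set h := xs - x.
set g := A^T *m (b - A *m xs).
have hr : b - A *m xs = z - A *m h.
  by rewrite /b /h mulmxBr; apply/matrixP => i j; rewrite !mxE; ring.
set s := norm2 (A *m h).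
have s0 : 0 <= s by apply: norm2_ge0.
have dual : forall i, norm2 (blk g i) <= lam := opt_dual lam0 opt.
have oxs : lam * norm21 xs <= dot xs g := opt_xs lam0 opt.
have st2 : s ^+ 2 <= eps * s + lam * (norm21 x - norm21 xs).
  have e1 : s ^+ 2 = dot (A *m h) z - dot h g.
    have : dot (A *m h) (b - A *m xs) = dot h g by rewrite dot_mulmx.
    by rewrite hr dotBr -norm2_sq -/s => <-; rewrite opprB addrC subrK.
  have e2 : dot h g = dot xs g - dot x g by rewrite /h dotBl.
  have e3 : dot x g <= lam * norm21 x.
    rewrite dot_blk /norm21 mulr_sumr; apply: ler_sum => i _.
    apply: le_trans (cs _ _) _; rewrite mulrC; apply: ler_wpM2r => //.
    exact: norm2_ge0.
  have e4 : dot (A *m h) z <= s * eps.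
    by apply: le_trans (cs _ _) _; apply: ler_wpM2l.
  lra.
set T := [set i | blk xk i != 0].
have cardT : (#|T| <= k)%N.
  case: hxk => H _; apply: leq_trans H; rewrite /norm20 leq_eqVlt; apply/orP; left; apply/eqP.
  apply: eq_card => i; rewrite inE; by rewrite unfold_in /in_set asboolb.
set n := fun i => norm2 (blk h i).
have n0 : forall i, 0 <= n i by move=> i; apply: norm2_ge0.
set P := \sum_(i in T) n i.
set Q := \sum_(i | i \notin T) n i.
have P0 : 0 <= P by apply: sumr_ge0.
have Q0 : 0 <= Q by apply: sumr_ge0.
set sig' := \sum_(i | i \notin T) norm2 (blk x i).
have sig0 : 0 <= sigma by apply: sumr_ge0 => i _; apply: norm2_ge0.
have hsig : sig' <= sigma.
  rewrite /sigma /norm21 (bigID (fun i => i \in T)) /=.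
  apply: ler_wpDl; first by apply: sumr_ge0 => i _; apply: norm2_ge0.
  rewrite le_eqVlt; apply/orP; left; apply/eqP; apply: eq_bigr => i iT.
  have : blk xk i = 0 by move: iT; rewrite inE negbK => /eqP.
  by rewrite blkB => ->; rewrite subr0.
have st3 : norm21 x - norm21 xs <= P - Q + 2 * sig'.
  rewrite /norm21 -sumrB (bigID (fun i => i \in T)) /=.
  have a1 : \sum_(i in T) (norm2 (blk x i) - norm2 (blk xs i)) <= P.
    apply: ler_sum => i _; rewrite /n /h blkB; exact: norm2_diff1.
  have a2 : \sum_(i | i \notin T) (norm2 (blk x i) - norm2 (blk xs i))
             <= 2 * sig' - Q.
    rewrite /sig' /Q mulr_sumr -sumrB; apply: ler_sum => i _.
    rewrite /n /h blkB; exact: norm2_diff2.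
  lra.
have k1 : (1 <= k)%N by apply: leq_trans k2.
have ha1 : (k%:R - 1) * muB A <= a'.
  have e : (k%:R - 1 : R) = (k.-1)%:R by rewrite -subn1 natrB.
  rewrite e /a' natrM.
  change ((k.-1)%:R * mu <= (k.-1)%:R * d%:R * mu).
  rewrite -mulrA ler_wpM2l ?ler0n //.
  by rewrite -[X in X <= _]mul1r ler_wpM2r // ler1n.
have hm' : muB A <= d%:R * mu.
  change (mu <= d%:R * mu).
  by rewrite -[X in X <= _]mul1r ler_wpM2r // ler1n.
set HT2 := \sum_(i in T) n i ^+ 2.
have HT20 : 0 <= HT2 by apply: sumr_ge0 => i _; apply: sqr_ge0.
have HT : Num.sqrt HT2 <= beta1 * s + beta2 * Q.
  have := coh orth h cardT ha1 a'0 hm'.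
  rewrite -/n -/HT2 -/s -/Q => hc.
  rewrite b1E b2E.
  apply: coh_fin => //; first exact: sqrtr_ge0.
    by apply: mulr_ge0 => //; apply: mulr_ge0; [apply: ltW | rewrite ler0n].
  by move: hc; rewrite -!mulrA.
have hP : P <= sk * Num.sqrt HT2.
  rewrite -ler_sqr ?nnegrE ?mulr_ge0 ?sqrtr_ge0 //.
  rewrite exprMn skk sqr_sqrtr //; apply: le_trans (sum_sq_le _ _) _.
  by apply: ler_wpM2r => //; rewrite ler_nat.
set c := sk * beta1 * lam + eps.
have cpos : 0 < c by rewrite /c; have := mulr_gt0 (mulr_gt0 sk0 b10) lam0; lra.
set t := sk * beta2.
have key : s ^+ 2 <= c * s - lam * (1 - t) * Q + 2 * lam * sigma.
  have l1 : lam * P <= lam * (sk * (beta1 * s + beta2 * Q)).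
    apply: ler_wpM2l; first exact: ltW.
    apply: le_trans hP _; apply: ler_wpM2l; [exact: ltW | exact: HT].
  have l2 : lam * sig' <= lam * sigma by apply: ler_wpM2l => //; exact: ltW.
  have l3 : lam * (norm21 x - norm21 xs) <= lam * (P - Q + 2 * sig').
    by apply: ler_wpM2l => //; exact: ltW.
  rewrite /c /t; lra.
have cs1 : c * s <= c ^+ 2 + 2 * lam * sigma.
  have lq : 0 <= lam * (1 - t) * Q.
    by apply: mulr_ge0 => //; apply: mulr_ge0; [exact: ltW | rewrite /t; lra].
  have ls : 0 <= lam * sigma by rewrite mulr_ge0 // ltW.
  case: (lerP s c) => hsc.
    have : c * s <= c * c by rewrite ler_pM2l.
    by rewrite expr2; lra.
  have : c * (s - c) <= s * (s - c) by rewrite ler_pM2r ?subr_gt0 // ltW.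
  rewrite expr2 in key *; lra.
split.
  rewrite -(ler_pM2l cpos).
  have -> : c * (2 * lam / c * sigma + 2 * c) = 2 * lam * sigma + 2 * c ^+ 2.
    by field; rewrite gt_eqF.
  have := sqr_ge0 c; lra.
have kn0 : (0 < k%:R :> R) by rewrite ltr0n.
set thr := Q / k%:R.
have thr0 : 0 <= thr by rewrite divr_ge0 ?ler0n.
set T1 := [set i | (i \notin T) && (thr < n i)].
have inT1 : forall i, (i \in T1) = (i \notin T) && (thr < n i) by move=> i; rewrite inE.
have sumT1 : forall F : 'I_l -> R,
    \sum_(i in T1) F i = \sum_(i | (i \notin T) && (i \in T1)) F i.
  move=> F; apply: eq_bigl => i; rewrite inT1; by case: (i \in T).
have sub1 : \sum_(i in T1) n i <= Q.
  rewrite sumT1 /Q [X in _ <= X](bigID (fun i => i \in T1)) /= lerDl.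
  by apply: sumr_ge0.
have cardT1 : (#|T1| <= k)%N.
  rewrite leqNgt; apply/negP => hlt.
  have lo : #|T1|%:R * thr <= \sum_(i in T1) n i.
    rewrite mulr_natl -sumr_const; apply: ler_sum => i.
    by rewrite inT1 => /andP[_ /ltW].
  have h1 : #|T1|%:R * Q / k%:R <= Q by rewrite -mulrA; exact: le_trans lo sub1.
  have [i0 i0T1] : exists i0, i0 \in T1.
    have : (0 < #|T1|)%N by apply: leq_ltn_trans (leq0n k) hlt.
    by rewrite card_gt0 => /set0Pn.
  have ni0 : n i0 <= Q.
    apply: le_trans sub1; rewrite (bigD1 i0) //= lerDl.
    by apply: sumr_ge0.
  move: i0T1; rewrite inT1 => /andP[_ hi0].
  have Qp : 0 < Q by apply: le_lt_trans thr0 (lt_le_trans hi0 ni0).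
  rewrite ler_pdivrMr // [X in _ <= X]mulrC ler_pM2r // ler_nat in h1.
  by move: hlt; rewrite ltnNge h1.
set HT12 := \sum_(i in T1) n i ^+ 2.
set Q1 := \sum_(i | i \notin T1) n i.
have HT120 : 0 <= HT12 by apply: sumr_ge0 => i _; apply: sqr_ge0.
have HT1 : Num.sqrt HT12 <= beta1 * s + beta2 * Q1.
  have := coh orth h cardT1 ha1 a'0 hm'.
  rewrite -/n -/HT12 -/s -/Q1 => hc.
  rewrite b1E b2E.
  have Q10 : 0 <= Q1 by apply: sumr_ge0.
  apply: coh_fin => //; first exact: sqrtr_ge0.
    by apply: mulr_ge0 => //; apply: mulr_ge0; [apply: ltW | rewrite ler0n].
  by move: hc; rewrite -!mulrA.
have Q1le : Q1 <= P + Q.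
  have e1 : \sum_i n i = P + Q by rewrite (bigID (fun i => i \in T)).
  have e2 : \sum_i n i = \sum_(i in T1) n i + Q1 by rewrite (bigID (fun i => i \in T1)).
  have : 0 <= \sum_(i in T1) n i by apply: sumr_ge0.
  lra.
set Wc := \sum_(i | (i \notin T) && (i \notin T1)) n i ^+ 2.
have W : Wc <= thr * Q.
  apply: le_trans (_ : _ <= \sum_(i | (i \notin T) && (i \notin T1)) thr * n i) _.
    apply: ler_sum => i /andP[iT iT1].
    have : n i <= thr by move: iT1; rewrite inT1 iT /= -leNgt.
    by move=> hi; rewrite expr2; apply: ler_wpM2r.
  rewrite -mulr_sumr; apply: ler_wpM2l => //.
  rewrite /Q [X in _ <= X](bigID (fun i => i \in T1)) /= lerDr.
  by apply: sumr_ge0.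
have nh2 : norm2 h ^+ 2 = HT2 + HT12 + Wc.
  rewrite norm2_blk (bigID (fun i => i \in T)) /= -addrA; congr (_ + _).
  rewrite (bigID (fun i => i \in T1)) /=; congr (_ + _).
  by rewrite /HT12 sumT1.
have thrQ : thr * Q = (Q / sk) ^+ 2 by rewrite expr_div_n skk /thr mulrAC -expr2.
have nhb : norm2 h <= Num.sqrt HT2 + Num.sqrt HT12 + Q / sk.
  have q0 : 0 <= Q / sk by rewrite divr_ge0.
  rewrite -ler_sqr ?nnegrE ?addr_ge0 ?sqrtr_ge0 ?norm2_ge0 //.
  rewrite nh2.
  have e1 : Num.sqrt HT2 ^+ 2 = HT2 by rewrite sqr_sqrtr.
  have e2 : Num.sqrt HT12 ^+ 2 = HT12 by rewrite sqr_sqrtr.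
  have p1 := mulr_ge0 (sqrtr_ge0 HT2) (sqrtr_ge0 HT12).
  have p2 := mulr_ge0 (sqrtr_ge0 HT2) q0.
  have p3 := mulr_ge0 (sqrtr_ge0 HT12) q0.
  rewrite !expr2 in e1 e2 thrQ *; lra.
have mine : norm2 h <= (2 + t) * beta1 * s + ((2 + t) * beta2 + sk^-1) * Q.
  have f1 : beta2 * Q1 <= beta2 * (P + Q) := ler_wpM2l b20 Q1le.
  have f2 : beta2 * P <= beta2 * (sk * Num.sqrt HT2) := ler_wpM2l b20 hP.
  have t0 : 0 <= 1 + t by rewrite /t; have := mulr_ge0 sk0' b20; lra.
  have f3 := ler_wpM2l t0 HT.
  have qe : Q / sk = sk^-1 * Q by rewrite mulrC.
  rewrite /t in f3 t0 *; lra.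
have qb : lam * (1 - t) * Q <= c ^+ 2 / 4 + 2 * lam * sigma.
  have := sqr_ge0 (s - c / 2); rewrite expr2 in key *; lra.
rewrite /fk /gk /= -skk.
rewrite /c /t in cs1 qb mine *.
exact: (@final2 R _ _ _ _ _ _ _ _ _ sk0 b10 b20 t1 lam0 eps0 sig0 s0 Q0 cs1 qb mine).
Qed.
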